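(* Let $p>1$ and $q>0$ be integers, and let $A\in\mathbb{R}^{(p+q)\times(p+q)}$ with columns $\alpha_1,\dots,\alpha_{p+q}$. Suppose $A$ is a positive operator of $M(p,q)$, i.e. $A\,M(p,q)\subseteq M(p,q)$. Then: (i) for each $i=1,\dots,p$, the transpose of the $i$-th row of $A$ belongs to $L(p,q)$; (ii) for each $i=1,\dots,p$, the column $\alpha_i$ belongs to $M(p,q)$; (iii) for each $i=1,\dots,p$ and every $u=(u_1,\dots,u_q)^\top\in\mathbb{R}^q$ with $\|u\|=1$, the vector $\alpha_i+\sum_{j=1}^q u_j\alpha_{p+j}$ belongs to $M(p,q)$; (iv) for each $i=1,\dots,p$ and each $j=1,\dots,q$, the vector $\alpha_i+\alpha_{p+j}$ belongs to $M(p,q)$; (v) if $A$ is Lyapunov-like on $M(p,q)$, then $e^{tA}\in\operatorname{Aut}(M(p,q))$ for every $t\in\mathbb{R}$, and in particular $e^{tA}$ is a positive operator of $M(p,q)$ for every $t\in\mathbb{R}$.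
   Context: Let $e=(1,\dots,1)\in\mathbb{R}^p$. Identify $\mathbb{R}^p\times\mathbb{R}^q$ with $\mathbb{R}^{p+q}$ (column vectors) with the standard inner product $\langle\cdot,\cdot\rangle$ and Euclidean norm $\|\cdot\|$. Define the extended Lorentz cones \[L(p,q)=\{(x,u)\in\mathbb{R}^p\times\mathbb{R}^q:\ x\ge\|u\|e\}\] (componentwise inequality) and \[M(p,q)=\{(x,u)\in\mathbb{R}^p\times\mathbb{R}^q:\ \langle x,e\rangle\ge\|u\|,\ x\ge 0\}.\] A matrix $A$ is a positive operator of a cone $C$ if $AC\subseteq C$. For a cone $K\subseteq\mathbb{R}^m$, its dual cone is $K^*=\{y:\langle x,y\rangle\ge0\ \forall x\in K\}$, and its complementarity set is $C(K)=\{(x,s):x\in K,\ s\in K^*,\ \langle x,s\rangle=0\}$. A matrix $A$ is Lyapunov-like on $K$ if $\langle Ax,s\rangle=0$ for all $(x,s)\in C(K)$. $\operatorname{Aut}(K)$ denotes the group of invertible linear maps $B$ with $BK=K$. *)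

(* Defs.v *)
From HB Require Import structures.
From mathcomp Require Import all_boot all_order all_algebra.
From mathcomp Require Import all_classical all_reals all_analysis.
Set Implicit Arguments. Unset Strict Implicit. Unset Printing Implicit Defensive.
Import Order.TTheory GRing.Theory Num.Theory.
Import numFieldNormedType.Exports.
Local Open Scope ring_scope.

Section Defs.
Variable R : realType.

Definition ip (m : nat) (x y : 'cV[R]_m) : R := \sum_(i < m) x i 0 * y i 0.
Definition enorm (m : nat) (x : 'cV[R]_m) : R := Num.sqrt (ip x x).

Definition Lcone (p q : nat) (v : 'cV[R]_(p + q)) : Prop :=
  forall i : 'I_p, enorm (dsubmx v) <= usubmx v i 0.

Definition Mcone (p q : nat) (v : 'cV[R]_(p + q)) : Prop :=
  enorm (dsubmx v) <= \sum_(i < p) usubmx v i 0 /\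
  forall i : 'I_p, 0 <= usubmx v i 0.

Definition positive_operator (m : nat) (K : 'cV[R]_m -> Prop) (A : 'M[R]_m) :=
  forall x, K x -> K (A *m x).

Definition dual_cone (m : nat) (K : 'cV[R]_m -> Prop) (y : 'cV[R]_m) : Prop :=
  forall x, K x -> 0 <= ip x y.

Definition compl_set (m : nat) (K : 'cV[R]_m -> Prop) (x s : 'cV[R]_m) : Prop :=
  K x /\ dual_cone K s /\ ip x s = 0.

Definition lyapunov_like (m : nat) (K : 'cV[R]_m -> Prop) (A : 'M[R]_m) :=
  forall x s, compl_set K x s -> ip (A *m x) s = 0.

Definition in_Aut (m : nat) (K : 'cV[R]_m -> Prop) (B : 'M[R]_m) : Prop :=
  B \in unitmx /\ forall y, K y <-> exists x, K x /\ y = B *m x.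

Definition expm (m : nat) (t : R) (A : 'M[R]_m) : 'M[R]_m :=
  \matrix_(i, j) limn (fun N : nat =>
     (\sum_(k < N) ((t ^+ k) / (k`!)%:R) *: (A ^+ k)) i j : R).

End Defs.

(* Main.v *)
Require Import Defs.
From HB Require Import structures.
From mathcomp Require Import all_boot all_order all_algebra.
From mathcomp Require Import all_classical all_reals all_analysis.
From mathcomp Require Import ring lra.
Import Order.TTheory GRing.Theory Num.Theory.
Import numFieldNormedType.Exports.
Local Open Scope classical_set_scope.
Local Open Scope ring_scope.

Lemma reidx (V : nmodType) (g : nat -> nat -> V) M N : (N <= M)%N ->
  \sum_(n < N) \sum_(i < n.+1) g i (n - i)%N =
  \sum_(j < M) \sum_(k < M | (j + k < N)%N) g j k.
Proof.
elim: N => [|N IH] leNM.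
  by rewrite big_ord0 big1 // => j _; rewrite big_pred0.
rewrite big_ord_recr /= IH ?(ltnW leNM) //.
have -> : \sum_(j < M) \sum_(k < M | (j + k < N.+1)%N) g j k =
  \sum_(j < M) \sum_(k < M | (j + k < N)%N) g j k +
  \sum_(j < M) \sum_(k < M | (j + k == N)%N) g j k.
  rewrite -big_split /=; apply: eq_bigr => j _.
  rewrite (bigID (fun k : 'I_M => (j + k < N)%N)) /=; congr (_ + _).
    by apply: eq_bigl => k; rewrite ltnS; case: ltngtP.
  by apply: eq_bigl => k; rewrite ltnS; case: ltngtP.
congr (_ + _).
have -> : \sum_(j < M) \sum_(k < M | (j + k == N)%N) g j k =
          \sum_(j < M) (if (j <= N)%N then g j (N - j)%N else 0).
  apply: eq_bigr => j _.
  case: leqP => hj.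
    rewrite (big_pred1 (Ordinal (leq_ltn_trans (leq_subr j N) leNM))) // => k /=.
    rewrite -val_eqE /=.
    by apply/eqP/eqP => [<-|->]; [rewrite addKn | rewrite subnKC].
  rewrite big_pred0 // => k; apply/negbTE; rewrite neq_ltn.
  by rewrite (leq_trans hj) ?leq_addr ?orbT.
rewrite (big_ord_widen _ (fun i => g i (N - i)%N) leNM) /=.
rewrite big_mkcond /=; apply: eq_bigr => j _; rewrite ltnS; by case: leqP.
Qed.
Section PS.
Variables (F : numFieldType) (V : algType F).
Definition ps (x : V) N := \sum_(k < N) (k`!%:R)^-1 *: x ^+ k.
Definition sqt (x y : V) N (P : nat -> nat -> bool) :=
  \sum_(j < N) \sum_(k < N | P j k) (((j`!%:R)^-1 * (k`!%:R)^-1 : F) *: (x ^+ j * y ^+ k)).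
Lemma ps_mul x y N : ps x N * ps y N = sqt x y N (fun _ _ => true).
Proof.
rewrite /ps /sqt mulr_suml; apply: eq_bigr => j _.
rewrite mulr_sumr; apply: eq_bigr => k _.
by rewrite -scalerAl -scalerAr scalerA mulrC.
Qed.
Lemma fact_coef n i : (i <= n)%N ->
  ((n`!%:R)^-1 * 'C(n, i)%:R : F) = ((n - i)`!%:R)^-1 * (i`!%:R)^-1.
Proof.
move=> hi; rewrite -(bin_fact hi) !natrM.
have h1 : (i`!%:R : F) != 0 by rewrite pnatr_eq0 -lt0n fact_gt0.
have h2 : ((n - i)`!%:R : F) != 0 by rewrite pnatr_eq0 -lt0n fact_gt0.
have h3 : ('C(n, i)%:R : F) != 0 by rewrite pnatr_eq0 -lt0n bin_gt0.
by rewrite !invfM mulrC !mulrA mulfV // mul1r mulrC.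
Qed.
Lemma ps_add x y N : GRing.comm x y ->
  ps (x + y) N = sqt x y N (fun j k => (j + k < N)%N).
Proof.
move=> cxy; rewrite /ps /sqt.
pose g j k := (((j`!%:R)^-1 * (k`!%:R)^-1 : F) *: (x ^+ j * y ^+ k)).
transitivity (\sum_(n < N) \sum_(i < n.+1) g ((n - i)%N) i).
  apply: eq_bigr => n _; rewrite exprDn_comm // scaler_sumr.
  apply: eq_bigr => i _; rewrite /g -[_ *+ 'C(n, i)]scaler_nat scalerA fact_coef //.
  by rewrite -ltnS.
rewrite (reidx _ (fun i j => g j i) N N (leqnn N)) /=.
under eq_bigr do rewrite big_mkcond.
under [RHS]eq_bigr do rewrite big_mkcond.
rewrite exchange_big /=.
by apply: eq_bigr => j _; apply: eq_bigr => k _; rewrite addnC.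
Qed.
Lemma sqt_diff x y N (P : nat -> nat -> bool) :
  sqt x y N (fun _ _ => true) - sqt x y N P = sqt x y N (fun j k => ~~ P j k).
Proof.
rewrite /sqt -sumrB; apply: eq_bigr => j _.
by rewrite (bigID (fun k : 'I_N => P j k)) /= addrC addrK.
Qed.
End PS.
Arguments ps {F V}.
Arguments sqt {F V}.
Section T.
Variable R : realType.
Variable n : nat.
Local Notation M := ('M[R]_n.+1).
Definition bnd (B : M) : R := \sum_i \sum_j `|B i j|.
Lemma bnd_ge0 (B : M) : 0 <= bnd B.
Proof. by apply: sumr_ge0 => i _; apply: sumr_ge0. Qed.
Lemma col_le_bnd (B : M) j : \sum_l `|B l j| <= bnd B.
Proof.
apply: ler_sum => l _.
by rewrite (bigD1 j) //= lerDl sumr_ge0.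
Qed.
Lemma pow_bound (B : M) k i j : `|(B ^+ k) i j| <= bnd B ^+ k.
Proof.
elim: k i j => [|k IH] i j.
  by rewrite expr0 mxE; case: (i == j); rewrite ?normr1 ?normr0.
rewrite exprSr -mulmxE mxE (le_trans (ler_norm_sum _ _ _)) //.
rewrite exprSr.
apply: le_trans (_ : \sum_l bnd B ^+ k * `|B l j| <= _).
  by apply: ler_sum => l _; rewrite normrM ler_wpM2r.
by rewrite -mulr_sumr ler_wpM2l ?exprn_ge0 ?bnd_ge0 ?col_le_bnd.
Qed.
Lemma prod_bound (B C : M) j k i l :
  `|(B ^+ j * C ^+ k) i l| <= n.+1%:R * (bnd B ^+ j * bnd C ^+ k).
Proof.
rewrite -mulmxE mxE (le_trans (ler_norm_sum _ _ _)) //.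
apply: le_trans (_ : \sum_(r < n.+1) (bnd B ^+ j * bnd C ^+ k) <= _).
  by apply: ler_sum => r _; rewrite normrM ler_pM ?pow_bound.
by rewrite sumr_const card_ord mulr_natl.
Qed.
Lemma ps_entry (B : M) N i j :
  ps B N i j = \sum_(k < N) (k`!%:R)^-1 * (B ^+ k) i j.
Proof. by rewrite /ps summxE; apply: eq_bigr => k _; rewrite mxE. Qed.
Lemma ps_cvg (B : M) i j : cvgn (fun N => ps B N i j).
Proof.
pose u k := (k`!%:R)^-1 * (B ^+ k) i j.
have -> : (fun N => ps B N i j) = series u.
  by apply/funext => N; rewrite ps_entry /series /= big_mkord.
apply: (@normed_cvg _ R^o).
rewrite /normed_series_of /=.
apply: (@series_le_cvg _ _ (exp_coeff (bnd B))) => //.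
- by move=> k; apply: exp_coeff_ge0; apply: bnd_ge0.
- move=> k; rewrite /u /exp_coeff /= normrM (@ger0_norm _ (k`!%:R^-1)) ?invr_ge0 //.
  by rewrite mulrC ler_wpM2r ?invr_ge0 // pow_bound.
- exact: is_cvg_series_exp_coeff.
Qed.
Lemma lim_sum_ord (k : nat) (f : 'I_k -> nat -> R) : (forall l, cvgn (f l)) ->
  cvgn (fun N => \sum_l f l N) /\ limn (fun N => \sum_l f l N) = \sum_l limn (f l).
Proof.
move=> cf.
suff H : forall r : seq 'I_k, cvgn (fun N => \sum_(l <- r) f l N) /\
   limn (fun N => \sum_(l <- r) f l N) = \sum_(l <- r) limn (f l) by apply: H.
elim=> [|a r [IHc IHl]].
  have -> : (fun N => \sum_(l <- [::]) f l N) = fun _ => 0.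
    by apply/funext => N; rewrite big_nil.
  by rewrite big_nil; split; [apply: is_cvg_cst | apply: lim_cst].
have -> : (fun N => \sum_(l <- a :: r) f l N) = f a + (fun N => \sum_(l <- r) f l N).
  by apply/funext => N; rewrite big_cons.
rewrite big_cons; split; first exact: is_cvgD.
by rewrite limD // IHl.
Qed.

Definition Xm (B : M) : M := \matrix_(i, j) limn (fun N => ps B N i j).

Lemma ps_scal_cvg (c : R) : (fun N => ps (V := R^o) c N) @ \oo --> expR c.
Proof.
have -> : (fun N => ps (V := R^o) c N) = series (exp_coeff c).
  apply/funext => N; rewrite /ps /series /= big_mkord; apply: eq_bigr => k _.
  by rewrite /exp_coeff /= mulrC.
rewrite /expR; exact: is_cvg_series_exp_coeff.
Qed.
Lemma sqt_entry (B C : M) N P i j : (sqt B C N P) i j =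
  \sum_(a < N) \sum_(b < N | P a b)
     ((a`!%:R)^-1 * (b`!%:R)^-1) * (B ^+ a * C ^+ b) i j.
Proof.
rewrite /sqt summxE; apply: eq_bigr => a _.
by rewrite summxE; apply: eq_bigr => b _; rewrite mxE.
Qed.

Lemma sqt_bound (B C : M) N P i j :
  `|(sqt B C N P) i j| <= n.+1%:R * sqt (V := R^o) (bnd B) (bnd C) N P.
Proof.
rewrite sqt_entry /sqt mulr_sumr (le_trans (ler_norm_sum _ _ _)) //.
apply: ler_sum => a _; rewrite mulr_sumr (le_trans (ler_norm_sum _ _ _)) //.
apply: ler_sum => b _; rewrite normrM ger0_norm ?mulr_ge0 ?invr_ge0 //.
rewrite mulrCA; apply: ler_wpM2l; first by rewrite mulr_ge0 ?invr_ge0.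
exact: prod_bound.
Qed.

Lemma Xm_mul (B C : M) : B * C = C * B -> Xm B *m Xm C = Xm (B + C).
Proof.
move=> cBC; apply/matrixP => i j; rewrite mxE [RHS]mxE.
have e1 : \sum_l Xm B i l * Xm C l j = limn (fun N => (ps B N * ps C N) i j).
  have -> : (fun N => (ps B N * ps C N) i j) =
            fun N => \sum_l ps B N i l * ps C N l j.
    by apply/funext => N; rewrite -mulmxE mxE.
  have [_ ->] := lim_sum_ord _ (fun l N => ps B N i l * ps C N l j)
    (fun l => is_cvgM (ps_cvg B i l) (ps_cvg C l j)).
  by apply: eq_bigr => l _; rewrite !mxE limM //; apply: ps_cvg.
rewrite e1.
pose h N := n.+1%:R * (ps (V := R^o) (bnd B) N * ps (V := R^o) (bnd C) N
                       - ps (V := R^o) (bnd B + bnd C) N).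
have hh : h @ \oo --> 0.
  have -> : 0 = n.+1%:R * (expR (bnd B) * expR (bnd C) - expR (bnd B + bnd C)) :> R.
    by rewrite expRD subrr mulr0.
  apply: cvgM; first exact: cvg_cst.
  apply: cvgB; last exact: ps_scal_cvg.
  by apply: cvgM; apply: ps_scal_cvg.
have hd : (fun N => (ps B N * ps C N) i j - ps (B + C) N i j) @ \oo --> 0.
  apply: (@squeeze_cvgr _ _ _ _ (fun N => - h N) h) => //; last first.
    by rewrite -oppr0; apply: cvgN.
  near=> N; rewrite -ler_norml.
  have -> : (ps B N * ps C N) i j - ps (B + C) N i j =
      (sqt B C N (fun a b => ~~ (a + b < N)%N)) i j.
    by rewrite -sqt_diff ps_mul ps_add // !mxE.
  apply: (le_trans (sqt_bound _ _ _ _ _ _)).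
  rewrite /h -sqt_diff ps_mul ps_add //; exact: mulrC.
have -> : (fun N => (ps B N * ps C N) i j) =
   (fun N => (ps B N * ps C N) i j - ps (B + C) N i j) + (fun N => ps (B + C) N i j).
  by apply/funext => N /=; rewrite subrK.
by rewrite limD //; [rewrite (cvg_lim _ hd) // add0r | apply: cvgP hd | apply: ps_cvg].
Unshelve. all: by end_near.
Qed.
Lemma row_pow (B : M) l b : (forall k, B l k = b * (l == k)%:R) ->
  forall k j, (B ^+ k) l j = b ^+ k * (l == j)%:R.
Proof.
move=> hB; elim=> [|k IH] j; first by rewrite expr0 !mxE mul1r.
rewrite exprS -mulmxE mxE (bigD1 l) //= big1 ?addr0.
  by rewrite hB eqxx mulr1 IH mulrA exprS.
by move=> r /negbTE nr; rewrite hB eq_sym nr mulr0 mul0r.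
Qed.

Lemma Xm_row (B : M) l b : (forall k, B l k = b * (l == k)%:R) ->
  forall j, Xm B l j = expR b * (l == j)%:R.
Proof.
move=> hB j; rewrite mxE.
have -> : (fun N => ps B N l j) = (fun N => ps (V := R^o) b N * (l == j)%:R).
  apply/funext => N; rewrite ps_entry /ps mulr_suml; apply: eq_bigr => k _.
  by rewrite (row_pow _ _ _ hB) mulrA.
apply: cvg_lim => //; apply: cvgM; [exact: ps_scal_cvg | exact: cvg_cst].
Qed.

Lemma Xm_tr (B : M) : (Xm B)^T = Xm B^T.
Proof.
have pT : forall k, (B ^+ k)^T = B^T ^+ k.
  elim=> [|k IH]; first by rewrite !expr0 tr_scalar_mx.
  by rewrite exprS exprSr -!mulmxE trmx_mul IH.
apply/matrixP => i j; rewrite !mxE.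
rewrite (_ : (fun N => ps B^T N i j) = (fun N => ps B N j i)) //.
apply/funext => N.
rewrite !ps_entry; apply: eq_bigr => k _; by rewrite -pT mxE.
Qed.

Lemma ps0 N : ps (0 : M) N.+1 = 1.
Proof.
rewrite /ps big_ord_recl /= expr0 invr1 scale1r big1 ?addr0 // => k _.
by rewrite expr0n /= scaler0.
Qed.

Lemma Xm0 : Xm 0 = 1.
Proof.
apply/matrixP => i j; rewrite mxE; apply: lim_near_cst => //.
near=> N; rewrite -(prednK (_ : (0 < N)%N)) ?ps0 //; near: N.
by exists 1%N.
Unshelve. all: by end_near.
Qed.
End T.
Arguments Xm {R n}. Arguments Xm_mul {R n}. Arguments Xm_row {R n}. Arguments Xm_tr {R n}. Arguments Xm0 {R n}.

Section G.
Variable R : realType.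

Lemma expm_Xm n (t : R) (A : 'M[R]_n.+1) : expm t A = Xm (t *: A).
Proof.
apply/matrixP => i j; rewrite !mxE.
rewrite (_ : (fun N => (\sum_(k < N) (t ^+ k / (k`!)%:R) *: A ^+ k) i j) =
             (fun N => ps (t *: A) N i j)) //.
apply/funext => N; rewrite ps_entry summxE; apply: eq_bigr => k _.
by rewrite mxE exprZn mxE mulrA (mulrC (k`!%:R^-1)).
Qed.

Lemma expm_add m (t s : R) (A : 'M[R]_m) :
  expm t A *m expm s A = expm (t + s) A.
Proof.
case: m A => [|n] A; first by apply/matrixP => [[]].
rewrite !expm_Xm Xm_mul ?scalerDl //.
by rewrite -scalerAl -scalerAr -scalerAl -scalerAr !scalerA mulrC.
Qed.

Lemma expm0 m (A : 'M[R]_m) : expm 0 A = 1%:M.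
Proof.
case: m A => [|n] A; first by apply/matrixP => [[]].
by rewrite expm_Xm scale0r Xm0.
Qed.

Lemma expm_inv m (t : R) (A : 'M[R]_m) : expm t A *m expm (- t) A = 1%:M.
Proof. by rewrite expm_add subrr expm0. Qed.

Lemma expm_row m (t : R) (A : 'M[R]_m) l d :
  (forall k, A l k = d * (l == k)%:R) ->
  forall j, expm t A l j = expR (t * d) * (l == j)%:R.
Proof.
case: m A l => [|n] A l; first by case: l.
move=> hA j; rewrite expm_Xm; apply: Xm_row => k.
by rewrite mxE hA mulrA.
Qed.

Lemma expm_trmul m (t : R) (A : 'M[R]_m) (c : R) : A^T + A = c%:M ->
  (expm t A)^T *m expm t A = (expR (t * c))%:M.
Proof.
case: m A => [|n] A; first by move=> _; apply/matrixP => [[]].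
move=> hc; rewrite !expm_Xm Xm_tr.
have hT : A^T = c%:M - A by rewrite -hc addrK.
have -> : (t *: A)^T = t *: A^T by apply/matrixP => i j; rewrite !mxE.
rewrite Xm_mul; last first.
  rewrite -scalerAl -scalerAr -scalerAl -scalerAr !scalerA hT.
  by rewrite mulrBl mulrBr -!mulmxE mul_scalar_mx mul_mx_scalar.
rewrite -scalerDr hc.
apply/matrixP => i j; rewrite (Xm_row _ i (t * c)); last first.
  by move=> k; rewrite !mxE mulr_natr mulrnAr.
by rewrite mxE mulr_natr.
Qed.
End G.

Set Implicit Arguments. Unset Strict Implicit. Unset Printing Implicit Defensive.

Section Basic.
Variable R : realType.

Definition ev n (i : 'I_n) : 'cV[R]_n := \col_k ((k == i)%:R).

Lemma sumd n (F : 'I_n -> R) b : \sum_x F x * (x == b)%:R = F b.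
Proof.
rewrite (bigD1 b) //= eqxx mulr1 big1 ?addr0 // => x /negbTE ->.
by rewrite mulr0.
Qed.

Lemma ipC n (v w : 'cV[R]_n) : ip v w = ip w v.
Proof. by apply: eq_bigr => i _; rewrite mulrC. Qed.

Lemma ip_ge0 n (v : 'cV[R]_n) : 0 <= ip v v.
Proof. by apply: sumr_ge0 => i _; rewrite -expr2 sqr_ge0. Qed.

Lemma enorm_ge0 n (v : 'cV[R]_n) : 0 <= enorm v.
Proof. exact: sqrtr_ge0. Qed.

Lemma enorm_sq n (v : 'cV[R]_n) : enorm v ^+ 2 = ip v v.
Proof. by rewrite sqr_sqrtr ?ip_ge0. Qed.

Lemma ipZl n c (v w : 'cV[R]_n) : ip (c *: v) w = c * ip v w.
Proof. by rewrite /ip mulr_sumr; apply: eq_bigr => i _; rewrite mxE mulrA. Qed.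

Lemma ipZr n c (v w : 'cV[R]_n) : ip v (c *: w) = c * ip v w.
Proof. by rewrite ipC ipZl ipC. Qed.

Lemma ipDl n (u v w : 'cV[R]_n) : ip (u + v) w = ip u w + ip v w.
Proof. by rewrite /ip -big_split; apply: eq_bigr => i _; rewrite mxE mulrDl. Qed.

Lemma ipDr n (u v w : 'cV[R]_n) : ip w (u + v) = ip w u + ip w v.
Proof. by rewrite ipC ipDl !(ipC w). Qed.

Lemma ipNl n (v w : 'cV[R]_n) : ip (- v) w = - ip v w.
Proof. by rewrite -scaleN1r ipZl mulN1r. Qed.

Lemma ipNr n (v w : 'cV[R]_n) : ip v (- w) = - ip v w.
Proof. by rewrite ipC ipNl ipC. Qed.

Lemma ip0l n (w : 'cV[R]_n) : ip 0 w = 0.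
Proof. by rewrite /ip big1 // => i _; rewrite mxE mul0r. Qed.

Lemma ip_ev n (i : 'I_n) (w : 'cV[R]_n) : ip (ev i) w = w i 0.
Proof. by rewrite ipC /ip (eq_bigr (fun k => w k 0 * (k == i)%:R)) ?sumd // => k _; rewrite mxE. Qed.

Lemma ip_evev n (i : 'I_n) : ip (ev i) (ev i) = 1.
Proof. by rewrite ip_ev mxE eqxx. Qed.

Lemma enorm_ev n (i : 'I_n) : enorm (ev i) = 1.
Proof. by rewrite /enorm ip_evev sqrtr1. Qed.

Lemma enorm0 n : enorm (0 : 'cV[R]_n) = 0.
Proof. by rewrite /enorm ip0l sqrtr0. Qed.

Lemma ip_eq0 n (v : 'cV[R]_n) : ip v v = 0 -> v = 0.
Proof.
move=> h; apply/matrixP => i j; rewrite (ord1 j) mxE.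
have H : forall k : 'I_n, true -> 0 <= v k 0 * v k 0.
  by move=> k _; rewrite -expr2 sqr_ge0.
have := psumr_eq0P H h.
move=> /(_ i isT).
by move/eqP; rewrite mulf_eq0 orbb => /eqP.
Qed.

Lemma CS1 n (y u : 'cV[R]_n) : ip u u = 1 -> ip y u <= enorm y.
Proof.
move=> hu.
have [N0|Npos] := eqVneq (enorm y) 0.
  have : ip y y = 0 by rewrite -enorm_sq N0 expr0n.
  by move/ip_eq0 => ->; rewrite ip0l enorm0.
have Ng : 0 < enorm y by rewrite lt0r Npos enorm_ge0.
have h := ip_ge0 (y - enorm y *: u).
rewrite ipDl !ipDr !ipNl !ipNr !ipZl !ipZr hu -enorm_sq (ipC u y) in h.
have : 2 * enorm y * ip y u <= 2 * enorm y * enorm y by nra.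
by rewrite ler_pM2l ?mulr_gt0.
Qed.
End Basic.

Section PQ.
Variables (R : realType) (p q : nat).
Implicit Types (A : 'M[R]_(p + q)) (v w : 'cV[R]_(p + q)).

Lemma ip_split v w : ip v w = ip (usubmx v) (usubmx w) + ip (dsubmx v) (dsubmx w).
Proof. by rewrite /ip big_split_ord /=; congr (_ + _); apply: eq_bigr => i _; rewrite !mxE. Qed.

Lemma Aentry A (x : 'cV[R]_p) (u : 'cV[R]_q) r :
  (A *m col_mx x u) r 0 =
  \sum_k A r (lshift q k) * x k 0 + \sum_j A r (rshift p j) * u j 0.
Proof. by rewrite mxE big_split_ord /=; congr (_ + _); apply: eq_bigr => i _; rewrite ?col_mxEu ?col_mxEd. Qed.

Lemma Mcol (x : 'cV[R]_p) (u : 'cV[R]_q) :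
  Mcone (p:=p) (q:=q) (col_mx x u) <-> (enorm u <= \sum_i x i 0 /\ forall i, 0 <= x i 0).
Proof. by rewrite /Mcone col_mxKu col_mxKd. Qed.

Lemma sum_ev n (i : 'I_n) : \sum_k (ev R i) k 0 = 1.
Proof. by rewrite (eq_bigr (fun k => 1 * (k == i)%:R)) ?sumd // => k _; rewrite mxE mul1r. Qed.

Lemma Mei i (u : 'cV[R]_q) : enorm u <= 1 -> Mcone (p:=p) (q:=q) (col_mx (ev R i) u).
Proof.
move=> hu; apply/Mcol; rewrite sum_ev; split => // k.
by rewrite mxE ler0n.
Qed.

Lemma Acol A i (u : 'cV[R]_q) :
  A *m col_mx (ev R i) u = col (lshift q i) A + \sum_j u j 0 *: col (rshift p j) A.
Proof.
apply/matrixP => r c; rewrite (ord1 c) Aentry !mxE summxE.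
congr (_ + _).
  by rewrite (eq_bigr (fun k => A r (lshift q k) * (k == i)%:R)) ?sumd // => k _; rewrite mxE.
by apply: eq_bigr => j _; rewrite !mxE mulrC.
Qed.

Lemma part_iii A (hA : positive_operator (@Mcone R p q) A) i (u : 'cV[R]_q) :
  enorm u <= 1 ->
  Mcone (p:=p) (q:=q) (col (lshift q i) A + \sum_(j < q) u j 0 *: col (rshift p j) A).
Proof. by move=> hu; rewrite -Acol; apply: hA; apply: Mei. Qed.

Lemma part_ii A (hA : positive_operator (@Mcone R p q) A) i :
  Mcone (p:=p) (q:=q) (col (lshift q i) A).
Proof.
have h0 : enorm (0 : 'cV[R]_q) <= 1 by rewrite enorm0 ler01.
have := part_iii hA i h0.
by rewrite big1 ?addr0 // => j _; rewrite mxE scale0r.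
Qed.

Lemma part_iv A (hA : positive_operator (@Mcone R p q) A) i j :
  Mcone (p:=p) (q:=q) (col (lshift q i) A + col (rshift p j) A).
Proof.
have h1 : enorm (ev R j) <= 1 by rewrite enorm_ev.
have := part_iii hA i h1.
rewrite (bigD1 j) //= big1 ?addr0; first by rewrite mxE eqxx scale1r.
by move=> k /negbTE nk; rewrite mxE nk scale0r.
Qed.

Lemma part_i A (hA : positive_operator (@Mcone R p q) A) i :
  Lcone (p:=p) (q:=q) (row (lshift q i) A)^T.
Proof.
move=> k.
set w := (row (lshift q i) A)^T.
have hw : usubmx w k 0 = A (lshift q i) (lshift q k) by rewrite !mxE.
rewrite hw; set a := A _ _; set b := dsubmx w.
have key : forall u : 'cV[R]_q, enorm u <= 1 -> 0 <= a + ip b u.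
  move=> u hu; have [_ /(_ i)] := hA _ (Mei k hu).
  rewrite mxE Aentry (eq_bigr (fun k' => A (lshift q i) (lshift q k') * (k' == k)%:R)).
    rewrite sumd; congr (0 <= _ + _); apply: eq_bigr => j _; by rewrite !mxE.
  by move=> k' _; rewrite mxE.
have [N0|Npos] := eqVneq (enorm b) 0.
  rewrite N0; have := key 0; rewrite enorm0 ler01 ipC ip0l addr0.
  by move=> /(_ isT).
have Ng : 0 < enorm b by rewrite lt0r Npos enorm_ge0.
have hu : enorm (- (enorm b)^-1 *: b) <= 1.
  rewrite {1}/enorm ipZl ipZr -enorm_sq.
  have -> : - (enorm b)^-1 * (- (enorm b)^-1 * enorm b ^+ 2) = 1.
    by field.
  by rewrite sqrtr1.
have := key _ hu; rewrite ipZr -enorm_sq.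
have -> : - (enorm b)^-1 * enorm b ^+ 2 = - enorm b.
  by field.
by rewrite subr_ge0.
Qed.
End PQ.

Section Lya.
Variables (R : realType) (p q : nat).
Variable A : 'M[R]_(p + q).
Hypothesis hp : (1 < p)%N.
Hypothesis hq : (0 < q)%N.
Hypothesis Ly : lyapunov_like (@Mcone R p q) A.

Local Notation Aul := (ulsubmx A).
Local Notation Aur := (ursubmx A).
Local Notation Adl := (dlsubmx A).
Local Notation Adr := (drsubmx A).

Lemma mul_ev m n (M : 'M[R]_(m, n)) k a : (M *m ev R k) a 0 = M a k.
Proof. by rewrite mxE (eq_bigr (fun b => M a b * (b == k)%:R)) ?sumd // => b _; rewrite mxE. Qed.

Lemma Ablock (x : 'cV[R]_p) (u : 'cV[R]_q) :
  A *m col_mx x u = col_mx (Aul *m x + Aur *m u) (Adl *m x + Adr *m u).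
Proof. by rewrite -{1}(submxK A) mul_block_col. Qed.

Lemma L1 l k (u : 'cV[R]_q) : l != k -> enorm u <= 1 ->
  Aul l k + (Aur *m u) l 0 = 0.
Proof.
move=> nlk hu.
set s : 'cV[R]_(p + q) := col_mx (ev R l) 0.
have ips : forall v, ip v s = usubmx v l 0.
  by move=> v; rewrite ip_split col_mxKu col_mxKd (ipC _ 0) ip0l addr0 ipC ip_ev.
have := Ly (x := col_mx (ev R k) u) (s := s).
have e : (Aul *m ev R k + Aur *m u) l 0 = Aul l k + (Aur *m u) l 0.
  by rewrite [LHS]mxE mul_ev.
rewrite ips Ablock col_mxKu e; apply; split; first exact: Mei.
split; last by rewrite ips col_mxKu mxE (negbTE nlk).
by move=> y [_ hy]; rewrite ips.
Qed.

Lemma Aul_off l k : l != k -> Aul l k = 0.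
Proof.
move=> nlk; have := L1 (u := 0) nlk; rewrite enorm0 ler01 mulmx0.
rewrite (_ : (0 : 'cV[R]_p) l 0 = 0) ?mxE // addr0.
by apply.
Qed.

Lemma other (l : 'I_p) : exists k, l != k.
Proof.
have h0 : (0 < p)%N by apply: ltnW.
have [h|h] := eqVneq (val l) 0%N.
  by exists (Ordinal hp); apply/eqP => /(congr1 val) /=; rewrite h.
exists (Ordinal h0); apply/eqP => /(congr1 val) /= e.
by move: h => /eqP; apply.
Qed.

Lemma Aur0 l j : Aur l j = 0.
Proof.
have [k nlk] := other l.
have := L1 (u := ev R j) nlk; rewrite enorm_ev lexx (Aul_off nlk) add0r mul_ev.
by apply.
Qed.

Lemma Aurmul0 (u : 'cV[R]_q) : Aur *m u = 0.
Proof.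
by apply/matrixP => a b; rewrite !mxE big1 // => j _; rewrite Aur0 mul0r.
Qed.

Lemma L2 k (u : 'cV[R]_q) : ip u u = 1 ->
  Aul k k = ip (Adl *m ev R k) u + ip (Adr *m u) u.
Proof.
move=> hu.
set s : 'cV[R]_(p + q) := col_mx (const_mx 1) (- u).
have ips : forall v, ip v s = \sum_l usubmx v l 0 - ip (dsubmx v) u.
  move=> v; rewrite ip_split col_mxKu col_mxKd ipNr; congr (_ - _).
  by apply: eq_bigr => l _; rewrite [const_mx 1 l 0]mxE mulr1.
have := Ly (x := col_mx (ev R k) u) (s := s).
rewrite ips Ablock col_mxKu col_mxKd Aurmul0 addr0 ipDl.
have -> : \sum_l (Aul *m ev R k) l 0 = Aul k k.
  rewrite (bigD1 k) //= big1 ?addr0 ?mul_ev // => l nl.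
  by rewrite mul_ev Aul_off.
move=> H; apply/eqP; rewrite -subr_eq0; apply/eqP; apply: H.
split; first by apply: Mei; rewrite /enorm hu sqrtr1.
split; last by rewrite ips col_mxKu col_mxKd sum_ev hu subrr.
move=> y [hy _]; rewrite ips subr_ge0 (le_trans _ hy) //.
exact: CS1.
Qed.

Lemma ipAev m n (M : 'M[R]_(m, n)) a b : ip (M *m ev R a) (ev R b) = M b a.
Proof. by rewrite ipC ip_ev mul_ev. Qed.

Lemma L3 k (u : 'cV[R]_q) : ip u u = 1 ->
  ip (Adl *m ev R k) u = 0 /\ ip (Adr *m u) u = Aul k k.
Proof.
move=> hu; have h1 := L2 k hu.
have hu' : ip (- u) (- u) = 1 by rewrite ipNl ipNr opprK.
have := L2 k hu'; rewrite mulmxN ipNl ipNr !ipNr opprK => h2.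
have hL : ip (Adl *m ev R k) u = 0.
  have : 2 * ip (Adl *m ev R k) u = 0 by lra.
  by move/eqP; rewrite mulf_eq0 pnatr_eq0 /= => /eqP.
by split => //; rewrite h1 hL add0r.
Qed.

Lemma Adl0 j k : Adl j k = 0.
Proof. by have [+ _] := L3 k (ip_evev R j); rewrite ipAev. Qed.

Let j0 : 'I_q := Ordinal hq.
Let d := Adr j0 j0.

Lemma Aul_diag k : Aul k k = d.
Proof. by have [_ <-] := L3 k (ip_evev R j0); rewrite ipAev. Qed.

Lemma Adr_diag j : Adr j j = d.
Proof.
have [_ h] := L3 (Ordinal (ltnW hp)) (ip_evev R j).
by rewrite ipAev in h; rewrite h Aul_diag.
Qed.

Lemma Adr_skew i j : i != j -> Adr i j + Adr j i = 0.
Proof.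
move=> nij.
pose w := ev R i + ev R j.
have hij : ip (ev R i) (ev R j) = 0 by rewrite ip_ev mxE (negbTE nij).
have hji : ip (ev R j) (ev R i) = 0 by rewrite ipC.
have hw : ip w w = 2 by rewrite !(ipDl, ipDr) !ip_evev hij hji addr0 add0r.
pose c := Num.sqrt (2^-1 : R).
have hc : c ^+ 2 = 2^-1 by rewrite sqr_sqrtr // invr_ge0.
have hu : ip (c *: w) (c *: w) = 1.
  by rewrite ipZl ipZr hw mulrA -expr2 hc mulVf.
have [_ h] := L3 (Ordinal (ltnW hp)) hu.
rewrite Aul_diag -scalemxAr ipZl ipZr mulrA -expr2 hc in h.
move: h; rewrite !(mulmxDr, ipDl, ipDr) !ipAev !Adr_diag => h.
have := congr1 (fun x => 2 * x) h; rewrite /= mulrA mulfV ?mul1r // => h2.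
lra.
Qed.

Lemma eA_ll (a b : 'I_p) : A (lshift q a) (lshift q b) = Aul a b. Proof. by rewrite !mxE. Qed.
Lemma eA_lr (a : 'I_p) (b : 'I_q) : A (lshift q a) (rshift p b) = Aur a b. Proof. by rewrite !mxE. Qed.
Lemma eA_rl (a : 'I_q) (b : 'I_p) : A (rshift p a) (lshift q b) = Adl a b. Proof. by rewrite !mxE. Qed.
Lemma eA_rr (a b : 'I_q) : A (rshift p a) (rshift p b) = Adr a b. Proof. by rewrite !mxE. Qed.

Lemma rowA l k : A (lshift q l) k = d * (lshift q l == k)%:R.
Proof.
rewrite -[k]splitK; case: (fintype.split k) => b /=.
  rewrite eA_ll eq_lshift; have [->|nlb] := eqVneq l b.
    by rewrite Aul_diag mulr1.
  by rewrite Aul_off // mulr0.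
by rewrite eA_lr Aur0 eq_lrshift mulr0.
Qed.

Lemma symA : A^T + A = (d + d)%:M.
Proof.
apply/matrixP => r s; rewrite !mxE.
rewrite -[r]splitK -[s]splitK; case: (fintype.split r) => a; case: (fintype.split s) => b /=.
- rewrite !eA_ll eq_lshift; have [->|nab] := eqVneq a b.
    by rewrite Aul_diag.
  by rewrite !Aul_off // 1?eq_sym // addr0.
- by rewrite eA_rl eA_lr Adl0 Aur0 eq_lrshift addr0.
- by rewrite eA_rl eA_lr Adl0 Aur0 eq_rlshift addr0.
- rewrite !eA_rr eq_rshift; have [->|nab] := eqVneq a b.
    by rewrite Adr_diag.
  by rewrite addrC Adr_skew.
Qed.
End Lya.

Lemma ipT (R : realType) n (v w : 'cV[R]_n) : ip v w = (v^T *m w) 0 0.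
Proof. by rewrite mxE; apply: eq_bigr => i _; rewrite mxE. Qed.

Lemma inv_M (R : realType) p q (E : 'M[R]_(p + q)) (e : R) : 0 < e ->
  (forall l k, E (lshift q l) k = e * (lshift q l == k)%:R) ->
  E^T *m E = (e ^+ 2)%:M ->
  forall x, Mcone (p:=p) (q:=q) x -> Mcone (p:=p) (q:=q) (E *m x).
Proof.
move=> e0 hE hEE x [hn hpos].
have top : usubmx (E *m x) = e *: usubmx x.
  apply/matrixP => l c; rewrite (ord1 c) !mxE.
  rewrite (eq_bigr (fun r => (e * x r 0) * (r == lshift q l)%:R)) ?sumd //.
  by move=> r _; rewrite hE eq_sym mulrAC.
have hip : ip (E *m x) (E *m x) = e ^+ 2 * ip x x.
  rewrite !ipT trmx_mul -mulmxA (mulmxA E^T) hEE mul_scalar_mx -scalemxAr.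
  by rewrite mxE.
rewrite ip_split (ip_split x) top ipZl ipZr mulrA -expr2 mulrDr in hip.
move/addrI: hip => hbot.
split.
  rewrite /enorm hbot sqrtrM ?sqr_ge0 // sqrtr_sqr ger0_norm ?(ltW e0) //.
  rewrite top (eq_bigr (fun i => e * usubmx x i 0)); last by move=> i _; rewrite mxE.
  by rewrite -mulr_sumr ler_wpM2l ?(ltW e0).
by move=> i; rewrite top mxE mulr_ge0 ?(ltW e0).
Qed.

Unset Implicit Arguments.

Theorem mainTheorem2 (R : realType) (p q : nat) (hp : (1 < p)%N) (hq : (0 < q)%N)
    (A : 'M[R]_(p + q)) (hA : positive_operator (@Mcone R p q) A) :
  (* (i) *) (forall i : 'I_p, Lcone (row (lshift q i) A)^T) /\
  (* (ii) *) (forall i : 'I_p, Mcone (col (lshift q i) A)) /\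
  (* (iii) *) (forall (i : 'I_p) (u : 'cV[R]_q), enorm u = 1 ->
      Mcone (col (lshift q i) A + \sum_(j < q) u j 0 *: col (rshift p j) A)) /\
  (* (iv) *) (forall (i : 'I_p) (j : 'I_q),
      Mcone (col (lshift q i) A + col (rshift p j) A)) /\
  (* (v) *) (lyapunov_like (@Mcone R p q) A ->
      (forall t : R, in_Aut (@Mcone R p q) (expm t A)) /\
      (forall t : R, positive_operator (@Mcone R p q) (expm t A))).
Proof.
split; first exact: part_i.
split; first exact: part_ii.
split; first by move=> i u hu; apply: part_iii => //; rewrite hu.
split; first exact: part_iv.
move=> Ly.
set d := drsubmx A (Ordinal hq) (Ordinal hq).
have inv : forall t x, Mcone (p:=p) (q:=q) x -> Mcone (p:=p) (q:=q) (expm t A *m x).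
  move=> t; apply: (inv_M (e := expR (t * d))); first exact: expR_gt0.
    move=> l k; apply: expm_row => k'; exact: (rowA hp hq Ly).
  rewrite (expm_trmul _ _ t _ _ (symA hp hq Ly)) mulrDr expRD expr2 //.
split => t; last by move=> x; apply: inv.
split.
  by have [] := mulmx1_unit (expm_inv _ _ t A).
move=> y; split.
  move=> hy; exists (expm (- t) A *m y); split; first exact: inv.
  by rewrite mulmxA expm_inv mul1mx.
by move=> [x [hx ->]]; apply: inv.
Qed.
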